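(* Let $P$ be the transition matrix of a reversible and ergodic Markov chain on $V=\{1,\dots,N\}$ with stationary distribution $\pi$, and consider any functional-router model for $P$ (any choice of routers $\sigma_v$, $v\in V$) with any initial configuration $\chi^{(0)}$. Then for every $w\in V$, every $T\ge 0$ and every $\gamma$ with $0<\gamma<1/2$, $$\left|\chi^{(T)}_w-\mu^{(T)}_w\right|\le \Psi_\sigma\,\frac{2(1-\gamma)}{1-2\gamma}\,\tau(\gamma)\,\frac{\pi_w}{\pi_{\min}}\,\Delta .$$
   Context: Let $V=\{1,\dots,N\}$ and let $P\in\mathbb{R}_{\ge 0}^{N\times N}$ be a stochastic matrix (entries may be irrational) that is ergodic (irreducible and aperiodic), with unique stationary distribution $\pi$; $\pi_{\min}=\min_{v}\pi_v$. $P$ is reversible if $\pi_uP_{u,v}=\pi_vP_{v,u}$ for all $u,v\in V$. For $v\in V$ let $\mathcal N(v)=\{u\in V: P_{v,u}>0\}$ (which contains $v$ if $P_{v,v}>0$), $\delta(v)=|\mathcal N(v)|$ and $\Delta=\max_v\delta(v)$. The total variation distance is $d_{TV}(\xi,\zeta)=\frac12\|\xi-\zeta\|_1$; the mixing time is $\tau(\varepsilon)=\max_{v\in V}\min\{t\in\mathbb{Z}_{\ge0}: d_{TV}(P^t_{v,\cdot},\pi)\le\varepsilon\}$, where $P^t_{v,\cdot}$ is row $v$ of $P^t$; the mixing rate is $t^*=\tau(1/4)$. A functional-router model consists of functions (routers) $\sigma_v:\mathbb{Z}_{\ge0}\to\mathcal N(v)$ for each $v\in V$. Write $I_{v,u}[z,z')=|\{j\in\{z,\dots,z'-1\}:\sigma_v(j)=u\}|$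 (equal to $0$ if $z'\le z$). Given an initial configuration $\chi^{(0)}\in\mathbb{Z}_{\ge0}^N$ with $\sum_v\chi^{(0)}_v=M$, define recursively $Z^{(t)}_{v,u}=I_{v,u}\big[\sum_{s=0}^{t-1}\chi^{(s)}_v,\ \sum_{s=0}^{t}\chi^{(s)}_v\big)$ and $\chi^{(t+1)}_u=\sum_{v\in V}Z^{(t)}_{v,u}$. Let $\mu^{(0)}=\chi^{(0)}$ and $\mu^{(t)}=\mu^{(0)}P^t$ (row vector times matrix). Define $\Psi_\sigma=\sup_{v\in V,\,u\in\mathcal N(v),\,t\ge0}\big|Z^{(t)}_{v,u}-\chi^{(t)}_vP_{v,u}\big|$. *)

(* Defs.v *)
From Stdlib Require Import Reals Lra Lia Arith List.
Import ListNotations.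
Open Scope R_scope.

(* V = {1..N} is represented by the indices 0..N-1 (nat); a matrix is nat -> nat -> R,
   only its entries with indices < N are meaningful. *)

Definition sumV (N : nat) (f : nat -> R) : R := fold_right Rplus 0 (map f (seq 0 N)).
Definition sumVn (N : nat) (f : nat -> nat) : nat := fold_right Nat.add 0%nat (map f (seq 0 N)).

Fixpoint Ppow (N : nat) (P : nat -> nat -> R) (t : nat) (u v : nat) : R :=
  match t with
  | O => if Nat.eqb u v then 1 else 0
  | S t' => sumV N (fun w => Ppow N P t' u w * P w v)
  end.

Definition stochastic (N : nat) (P : nat -> nat -> R) : Prop :=
  (forall u v, (u < N)%nat -> (v < N)%nat -> 0 <= P u v) /\
  (forall u, (u < N)%nat -> sumV N (fun v => P u v) = 1).

Definition irreducible (N : nat) (P : nat -> nat -> R) : Prop :=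
  forall u v, (u < N)%nat -> (v < N)%nat -> exists t, 0 < Ppow N P t u v.

(* period of every state is 1: the gcd of {t >= 1 : P^t_{v,v} > 0} is 1 *)
Definition aperiodic (N : nat) (P : nat -> nat -> R) : Prop :=
  forall v, (v < N)%nat ->
    forall d : nat, (forall t, (1 <= t)%nat -> 0 < Ppow N P t v v -> Nat.divide d t) -> d = 1%nat.

Definition ergodic (N : nat) (P : nat -> nat -> R) : Prop :=
  irreducible N P /\ aperiodic N P.

Definition stationary (N : nat) (P : nat -> nat -> R) (pi : nat -> R) : Prop :=
  (forall v, (v < N)%nat -> 0 <= pi v) /\ sumV N pi = 1 /\
  (forall v, (v < N)%nat -> sumV N (fun u => pi u * P u v) = pi v).

Definition reversible (N : nat) (P : nat -> nat -> R) (pi : nat -> R) : Prop :=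
  forall u v, (u < N)%nat -> (v < N)%nat -> pi u * P u v = pi v * P v u.

(* pi_min (N >= 1 assumed where used) *)
Definition pimin (N : nat) (pi : nat -> R) : R := fold_right Rmin (pi 0%nat) (map pi (seq 0 N)).

Definition posb (x : R) : bool := if Rlt_dec 0 x then true else false.
Definition degree (N : nat) (P : nat -> nat -> R) (v : nat) : nat :=
  length (filter (fun u => posb (P v u)) (seq 0 N)).
Definition maxdeg (N : nat) (P : nat -> nat -> R) : nat :=
  fold_right Nat.max 0%nat (map (degree N P) (seq 0 N)).

Definition dTV_row (N : nat) (P : nat -> nat -> R) (pi : nat -> R) (t v : nat) : R :=
  / 2 * sumV N (fun u => Rabs (Ppow N P t v u - pi u)).

Definition first_hit (N : nat) (P : nat -> nat -> R) (pi : nat -> R) (eps : R) (v t : nat) : Prop :=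
  dTV_row N P pi t v <= eps /\ (forall s, (s < t)%nat -> eps < dTV_row N P pi s v).

(* is_tau ... eps T : T = tau(eps) = max_v min{t : d_TV(P^t_v, pi) <= eps} *)
Definition is_tau (N : nat) (P : nat -> nat -> R) (pi : nat -> R) (eps : R) (T : nat) : Prop :=
  (exists v, (v < N)%nat /\ first_hit N P pi eps v T) /\
  (forall v t, (v < N)%nat -> first_hit N P pi eps v t -> (t <= T)%nat).

Definition valid_routers (N : nat) (P : nat -> nat -> R) (sigma : nat -> nat -> nat) : Prop :=
  forall v j, (v < N)%nat -> (sigma v j < N)%nat /\ 0 < P v (sigma v j).

Definition Icount (sigma : nat -> nat -> nat) (v u z z' : nat) : nat :=
  length (filter (fun j => Nat.eqb (sigma v j) u) (seq z (z' - z))).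

(* state at time t: (chi^(t), fun v => sum_{s<t} chi^(s)_v) *)
Fixpoint rstate (N : nat) (sigma : nat -> nat -> nat) (chi0 : nat -> nat) (t : nat)
  : (nat -> nat) * (nat -> nat) :=
  match t with
  | O => (chi0, fun _ => 0%nat)
  | S t' =>
      let (c, cum) := rstate N sigma chi0 t' in
      (fun u => sumVn N (fun v => Icount sigma v u (cum v) (cum v + c v)),
       fun v => (cum v + c v)%nat)
  end.

Definition chi (N : nat) (sigma : nat -> nat -> nat) (chi0 : nat -> nat) (t : nat) : nat -> nat :=
  fst (rstate N sigma chi0 t).
Definition cumchi (N : nat) (sigma : nat -> nat -> nat) (chi0 : nat -> nat) (t : nat) : nat -> nat :=
  snd (rstate N sigma chi0 t).

Definition Zflow (N : nat) (sigma : nat -> nat -> nat) (chi0 : nat -> nat) (t v u : nat) : nat :=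
  Icount sigma v u (cumchi N sigma chi0 t v) (cumchi N sigma chi0 t v + chi N sigma chi0 t v).

Definition mu (N : nat) (P : nat -> nat -> R) (chi0 : nat -> nat) (t w : nat) : R :=
  sumV N (fun v => INR (chi0 v) * Ppow N P t v w).

(* B is an upper bound of the set whose supremum is Psi_sigma *)
Definition Psi_bound (N : nat) (P : nat -> nat -> R) (sigma : nat -> nat -> nat)
  (chi0 : nat -> nat) (B : R) : Prop :=
  forall v u t, (v < N)%nat -> (u < N)%nat -> 0 < P v u ->
    Rabs (INR (Zflow N sigma chi0 t v u) - INR (chi N sigma chi0 t v) * P v u) <= B.

(* Main.v *)
Require Import Defs.
From Stdlib Require Import Reals Lra Lia Arith List Classical.
Import ListNotations.
Open Scope R_scope.

Lemma fr_app (l l' : list R) : fold_right Rplus 0 (l ++ l') = fold_right Rplus 0 l + fold_right Rplus 0 l'.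
Proof. induction l; simpl; [lra | rewrite IHl; lra]. Qed.

Lemma frn_app (l l' : list nat) : fold_right Nat.add 0%nat (l ++ l') = (fold_right Nat.add 0%nat l + fold_right Nat.add 0%nat l')%nat.
Proof. induction l; simpl; [lia | rewrite IHl; lia]. Qed.

Lemma sumV_0 f : sumV 0 f = 0. Proof. reflexivity. Qed.
Lemma sumV_S n f : sumV (S n) f = sumV n f + f n.
Proof. unfold sumV. rewrite seq_S, map_app, fr_app. simpl. lra. Qed.
Lemma sumVn_S n f : sumVn (S n) f = (sumVn n f + f n)%nat.
Proof. unfold sumVn. rewrite seq_S, map_app, frn_app. simpl. lia. Qed.
Lemma sumVn_INR n f : INR (sumVn n f) = sumV n (fun i => INR (f i)).
Proof. induction n. reflexivity. rewrite sumVn_S, sumV_S, plus_INR, IHn. reflexivity. Qed.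

Lemma sumV_ext n f g : (forall i, (i < n)%nat -> f i = g i) -> sumV n f = sumV n g.
Proof. induction n; intros H; [reflexivity|]. rewrite !sumV_S, IHn by (intros; apply H; lia).
  rewrite (H n) by lia. reflexivity. Qed.
Lemma sumV_plus n f g : sumV n (fun i => f i + g i) = sumV n f + sumV n g.
Proof. induction n; [unfold sumV; simpl; lra|]. rewrite !sumV_S, IHn. lra. Qed.
Lemma sumV_minus n f g : sumV n (fun i => f i - g i) = sumV n f - sumV n g.
Proof. induction n; [unfold sumV; simpl; lra|]. rewrite !sumV_S, IHn. lra. Qed.
Lemma sumV_scal_l n c f : sumV n (fun i => c * f i) = c * sumV n f.
Proof. induction n; [unfold sumV; simpl; lra|]. rewrite !sumV_S, IHn. lra. Qed.
Lemma sumV_scal_r n c f : sumV n (fun i => f i * c) = sumV n f * c.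
Proof. induction n; [unfold sumV; simpl; lra|]. rewrite !sumV_S, IHn. lra. Qed.
Lemma sumV_le n f g : (forall i, (i<n)%nat -> f i <= g i) -> sumV n f <= sumV n g.
Proof. induction n; intros H; [unfold sumV; simpl; lra|]. rewrite !sumV_S.
  assert (sumV n f <= sumV n g) by (apply IHn; intros; apply H; lia).
  specialize (H n ltac:(lia)). lra. Qed.
Lemma sumV_zero n f : (forall i, (i<n)%nat -> f i = 0) -> sumV n f = 0.
Proof. intros H. transitivity (sumV n (fun _ => 0)). apply sumV_ext; auto.
  induction n; [reflexivity|]. rewrite sumV_S, IHn; [lra|]. intros; apply H; lia. Qed.
Lemma sumV_nonneg n f : (forall i, (i<n)%nat -> 0 <= f i) -> 0 <= sumV n f.
Proof. intros H. rewrite <- (sumV_zero n (fun _ => 0)) by auto. apply sumV_le. auto. Qed.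
Lemma sumV_abs n f : Rabs (sumV n f) <= sumV n (fun i => Rabs (f i)).
Proof. induction n; [unfold sumV; simpl; rewrite Rabs_R0; lra|]. rewrite !sumV_S.
  eapply Rle_trans; [apply Rabs_triang|]. lra. Qed.
Lemma sumV_swap n m f : sumV n (fun i => sumV m (fun j => f i j)) = sumV m (fun j => sumV n (fun i => f i j)).
Proof. induction n.
  - rewrite sumV_0, sumV_zero; auto.
  - rewrite sumV_S, IHn, <- sumV_plus. apply sumV_ext. intros. rewrite sumV_S. reflexivity. Qed.
Lemma sumV_single n f i : (forall j, (j<n)%nat -> 0 <= f j) -> (i < n)%nat -> f i <= sumV n f.
Proof. induction n; intros H Hi; [lia|]. rewrite sumV_S.
  assert (0 <= sumV n f) by (apply sumV_nonneg; intros; apply H; lia).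
  destruct (Nat.eq_dec i n). subst; lra.
  assert (f i <= sumV n f) by (apply IHn; [intros; apply H|]; lia).
  specialize (H n ltac:(lia)). lra. Qed.
Lemma sumV_pt n h i : (i < n)%nat -> (forall j, (j<n)%nat -> j <> i -> h j = 0) -> sumV n h = h i.
Proof. induction n; intros Hi H; [lia|]. rewrite sumV_S.
  destruct (Nat.eq_dec i n).
  - subst. rewrite sumV_zero; [lra|]. intros; apply H; lia.
  - rewrite IHn by (try intros; try apply H; lia). rewrite (H n) by lia. lra. Qed.
Lemma sumV_add a b f : sumV (a + b) f = sumV a f + sumV b (fun r => f (a + r)%nat).
Proof. induction b. rewrite Nat.add_0_r, sumV_0. lra.
  rewrite Nat.add_succ_r, !sumV_S, IHb. lra. Qed.
Lemma sumV_shift n f : sumV (S n) f = f 0%nat + sumV n (fun i => f (S i)).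
Proof. induction n. rewrite sumV_S, !sumV_0. lra.
  rewrite sumV_S, IHn, sumV_S. lra. Qed.
Lemma sumV_count n (p : nat -> bool) : INR (length (filter p (seq 0 n))) = sumV n (fun i => if p i then 1 else 0).
Proof. induction n. reflexivity. rewrite seq_S, filter_app, length_app, plus_INR, IHn, sumV_S.
  simpl. destruct (p n); simpl; lra. Qed.
Lemma Ppow_0 N P u v : Ppow N P 0 u v = if Nat.eqb u v then 1 else 0.
Proof. reflexivity. Qed.
Lemma Ppow_S N P t u v : Ppow N P (S t) u v = sumV N (fun w => Ppow N P t u w * P w v).
Proof. reflexivity. Qed.

Lemma Ppow_1 N P u v : (u < N)%nat -> Ppow N P 1 u v = P u v.
Proof. intros Hu. rewrite Ppow_S. rewrite (sumV_pt N _ u Hu).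
  - rewrite Ppow_0, Nat.eqb_refl. lra.
  - intros j Hj Hne. rewrite Ppow_0. destruct (Nat.eqb_spec u j); [lia|lra]. Qed.

Lemma Ppow_add N P a b x z : (z < N)%nat ->
  Ppow N P (a + b) x z = sumV N (fun y => Ppow N P a x y * Ppow N P b y z).
Proof. revert z. induction b; intros z Hz.
  - rewrite Nat.add_0_r. rewrite (sumV_pt N _ z Hz).
    + rewrite Ppow_0, Nat.eqb_refl. lra.
    + intros j Hj Hne. rewrite Ppow_0. destruct (Nat.eqb_spec j z); [lia|lra].
  - rewrite Nat.add_succ_r, Ppow_S.
    transitivity (sumV N (fun w => sumV N (fun y => Ppow N P a x y * Ppow N P b y w * P w z))).
    { apply sumV_ext; intros w Hw. rewrite IHb by lia. rewrite <- sumV_scal_r. apply sumV_ext; intros; ring. }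
    rewrite sumV_swap. apply sumV_ext; intros y Hy. rewrite Ppow_S, <- sumV_scal_l. apply sumV_ext; intros; ring.
Qed.

Lemma Ppow_S_left N P s x z : (x < N)%nat -> (z < N)%nat ->
  Ppow N P (S s) x z = sumV N (fun y => P x y * Ppow N P s y z).
Proof. intros Hx Hz. replace (S s) with (1 + s)%nat by lia. rewrite Ppow_add by auto.
  apply sumV_ext; intros. rewrite Ppow_1 by auto. reflexivity. Qed.

Lemma Ppow_nonneg N P t x z : (forall u v, (u < N)%nat -> (v < N)%nat -> 0 <= P u v) ->
  (z < N)%nat -> 0 <= Ppow N P t x z.
Proof. intros HP. revert z. induction t; intros z Hz.
  - rewrite Ppow_0. destruct (Nat.eqb x z); lra.
  - rewrite Ppow_S. apply sumV_nonneg. intros. apply Rmult_le_pos; auto. Qed.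

Lemma Ppow_rowsum N P t x : (forall u, (u < N)%nat -> sumV N (fun v => P u v) = 1) ->
  (x < N)%nat -> sumV N (fun z => Ppow N P t x z) = 1.
Proof. intros HR Hx. induction t.
  - rewrite (sumV_pt N _ x Hx). rewrite Ppow_0, Nat.eqb_refl; lra.
    intros j Hj Hne. rewrite Ppow_0. destruct (Nat.eqb_spec x j); [lia|lra].
  - transitivity (sumV N (fun z => sumV N (fun w => Ppow N P t x w * P w z))).
    { apply sumV_ext; intros. apply Ppow_S. }
    rewrite sumV_swap. rewrite <- IHt. apply sumV_ext; intros w Hw.
    rewrite sumV_scal_l, HR by auto. ring. Qed.

Lemma stat_pow N P pi t z : (forall v, (v < N)%nat -> sumV N (fun u => pi u * P u v) = pi v) ->
  (z < N)%nat -> sumV N (fun u => pi u * Ppow N P t u z) = pi z.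
Proof. intros HS. revert z. induction t; intros z Hz.
  - rewrite (sumV_pt N _ z Hz). rewrite Ppow_0, Nat.eqb_refl; lra.
    intros j Hj Hne. rewrite Ppow_0. destruct (Nat.eqb_spec j z); [lia|lra].
  - transitivity (sumV N (fun u => sumV N (fun w => pi u * Ppow N P t u w * P w z))).
    { apply sumV_ext; intros. rewrite Ppow_S, <- sumV_scal_l. apply sumV_ext; intros; ring. }
    rewrite sumV_swap. rewrite <- (HS z Hz). apply sumV_ext; intros w Hw.
    rewrite sumV_scal_r, IHt by auto. reflexivity. Qed.

Lemma rev_pow N P pi s u w : reversible N P pi -> (u < N)%nat -> (w < N)%nat ->
  pi u * Ppow N P s u w = pi w * Ppow N P s w u.
Proof. intros Hrev. revert u w. induction s; intros u w Hu Hw.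
  - rewrite !Ppow_0. destruct (Nat.eqb_spec u w); destruct (Nat.eqb_spec w u); subst; try lia; ring.
  - rewrite Ppow_S, (Ppow_S_left N P s w u) by auto. rewrite <- !sumV_scal_l.
    apply sumV_ext; intros x Hx.
    transitivity ((pi u * Ppow N P s u x) * P x w); [ring|]. rewrite IHs by auto.
    transitivity (Ppow N P s x u * (pi x * P x w)); [ring|]. rewrite Hrev by auto. ring. Qed.

Definition Adist N P (pi : nat -> R) t x := sumV N (fun z => Rabs (Ppow N P t x z - pi z)).

Lemma ident N P pi a b c x z :
  (forall u, (u < N)%nat -> sumV N (fun v => P u v) = 1) ->
  (forall v, (v < N)%nat -> sumV N (fun u => pi u * P u v) = pi v) ->
  sumV N pi = 1 -> (x < N)%nat -> (z < N)%nat ->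
  sumV N (fun y => (Ppow N P a x y - c * pi y) * (Ppow N P b y z - pi z)) = Ppow N P (a+b) x z - pi z.
Proof. intros HR HS Hs1 Hx Hz.
  transitivity (sumV N (fun y => Ppow N P a x y * Ppow N P b y z - Ppow N P a x y * pi z
      - c * (pi y * Ppow N P b y z) + (c * pi z) * pi y)).
  { apply sumV_ext; intros; ring. }
  rewrite sumV_plus, !sumV_minus, sumV_scal_r, !sumV_scal_l.
  assert (H1: sumV N (Ppow N P a x) = 1) by exact (Ppow_rowsum N P a x HR Hx).
  rewrite H1, (stat_pow N P pi b z HS Hz), Hs1, <- Ppow_add by auto. ring. Qed.

Lemma G_bound N P pi a b x (W : nat -> R) :
  (forall z, (z < N)%nat -> Ppow N P (a+b) x z - pi z = sumV N (fun y => W y * (Ppow N P b y z - pi z))) ->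
  Adist N P pi (a+b) x <= sumV N (fun y => Rabs (W y) * Adist N P pi b y).
Proof. intros H. unfold Adist.
  apply Rle_trans with (sumV N (fun z => sumV N (fun y => Rabs (W y) * Rabs (Ppow N P b y z - pi z)))).
  - apply sumV_le; intros z Hz. rewrite H by auto. eapply Rle_trans; [apply sumV_abs|].
    apply sumV_le; intros. rewrite Rabs_mult. lra.
  - rewrite sumV_swap. apply sumV_le; intros. rewrite sumV_scal_l. lra. Qed.

Lemma G2 N P pi a b x :
  (forall u v, (u < N)%nat -> (v < N)%nat -> 0 <= P u v) ->
  (forall u, (u < N)%nat -> sumV N (fun v => P u v) = 1) ->
  (forall v, (v < N)%nat -> sumV N (fun u => pi u * P u v) = pi v) ->
  (x < N)%nat -> Adist N P pi (a+b) x <= Adist N P pi a x.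
Proof. intros HP HR HS Hx. unfold Adist.
  apply Rle_trans with (sumV N (fun z => sumV N (fun y => Rabs (Ppow N P a x y - pi y) * Ppow N P b y z))).
  - apply sumV_le; intros z Hz.
    assert (E: Ppow N P (a + b) x z - pi z = sumV N (fun y => (Ppow N P a x y - pi y) * Ppow N P b y z)).
    { transitivity (sumV N (fun y => Ppow N P a x y * Ppow N P b y z - pi y * Ppow N P b y z)).
      rewrite sumV_minus, (stat_pow N P pi b z HS Hz), (Ppow_add N P a b x z Hz). reflexivity.
      apply sumV_ext; intros; ring. }
    rewrite E. eapply Rle_trans; [apply sumV_abs|].
    apply sumV_le; intros. rewrite Rabs_mult. rewrite (Rabs_right (Ppow N P b i z)). lra.
    apply Rle_ge, Ppow_nonneg; auto.
  - rewrite sumV_swap. apply sumV_le; intros y Hy. rewrite sumV_scal_l.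
    assert (H1: sumV N (Ppow N P b y) = 1) by exact (Ppow_rowsum N P b y HR Hy).
    rewrite H1. lra. Qed.

Lemma Adist_le2 N P pi t x :
  (forall u v, (u < N)%nat -> (v < N)%nat -> 0 <= P u v) ->
  (forall u, (u < N)%nat -> sumV N (fun v => P u v) = 1) ->
  (forall v, (v < N)%nat -> 0 <= pi v) -> sumV N pi = 1 ->
  (x < N)%nat -> Adist N P pi t x <= 2.
Proof. intros HP HR Hpi Hs1 Hx. unfold Adist.
  apply Rle_trans with (sumV N (fun z => Ppow N P t x z + pi z)).
  - apply sumV_le; intros z Hz. pose proof (Ppow_nonneg N P t x z HP Hz). pose proof (Hpi z Hz).
    unfold Rabs; destruct Rcase_abs; lra.
  - rewrite sumV_plus. assert (H1: sumV N (Ppow N P t x) = 1) by exact (Ppow_rowsum N P t x HR Hx).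
    rewrite H1, Hs1. lra. Qed.

Lemma Adist_nonneg N P pi t x : 0 <= Adist N P pi t x.
Proof. unfold Adist. apply sumV_nonneg. intros; apply Rabs_pos. Qed.

Lemma sumV_const n c : sumV n (fun _ => c) = INR n * c.
Proof. induction n. rewrite sumV_0; simpl; lra. rewrite sumV_S, IHn, S_INR. lra. Qed.

Lemma pow_small q c e : 0 <= q < 1 -> 0 < e -> exists k, c * q ^ k <= e.
Proof. intros Hq He. destruct (Rle_dec c 0).
  - exists 0%nat. simpl. lra.
  - destruct (pow_lt_1_zero q ltac:(rewrite Rabs_right; lra) (e / c) ltac:(apply Rdiv_lt_0_compat; lra)) as [m Hn].
    exists m. specialize (Hn m (le_n m)). rewrite Rabs_right in Hn by (apply Rle_ge, pow_le; lra).
    apply Rmult_lt_compat_l with (r := c) in Hn; [|lra].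
    replace (c * (e / c)) with e in Hn by (field; lra). lra. Qed.

Lemma pow_zero_lim q c a : 0 <= q < 1 -> (forall k, a <= c * q ^ k) -> a <= 0.
Proof. intros Hq H. destruct (Rle_dec a 0); auto.
  destruct (pow_small q c (a/2) Hq) as [k Hk]; [lra|]. specialize (H k). lra. Qed.

Lemma blocks N P pi tg g :
  (forall u v, (u < N)%nat -> (v < N)%nat -> 0 <= P u v) ->
  (forall u, (u < N)%nat -> sumV N (fun v => P u v) = 1) ->
  (forall v, (v < N)%nat -> sumV N (fun u => pi u * P u v) = pi v) ->
  sumV N pi = 1 -> 0 <= g ->
  (forall y, (y < N)%nat -> Adist N P pi tg y <= 2 * g) ->
  forall k x r, (x < N)%nat -> Adist N P pi (S k * tg + r) x <= 2 * g * (2 * g) ^ k.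
Proof. intros HP HR HS Hs1 Hg Htg k. induction k; intros x r Hx.
  - replace (1 * tg + r)%nat with (r + tg)%nat by lia.
    eapply Rle_trans. apply (G_bound N P pi r tg x (fun y => Ppow N P r x y - 0 * pi y)).
    { intros z Hz. rewrite ident; auto. }
    apply Rle_trans with (sumV N (fun y => Ppow N P r x y * (2 * g))).
    + apply sumV_le; intros y Hy. replace (Ppow N P r x y - 0 * pi y) with (Ppow N P r x y) by ring.
      rewrite Rabs_right by (apply Rle_ge, Ppow_nonneg; auto).
      apply Rmult_le_compat_l; [apply Ppow_nonneg; auto| auto].
    + rewrite sumV_scal_r. assert (H1: sumV N (Ppow N P r x) = 1) by exact (Ppow_rowsum N P r x HR Hx).
      rewrite H1. simpl. lra.
  - replace (S (S k) * tg + r)%nat with (tg + (S k * tg + r))%nat by lia.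
    eapply Rle_trans. apply (G_bound N P pi tg (S k * tg + r) x (fun y => Ppow N P tg x y - 1 * pi y)).
    { intros z Hz. rewrite ident; auto. }
    apply Rle_trans with (sumV N (fun y => Rabs (Ppow N P tg x y - 1 * pi y) * (2 * g * (2 * g) ^ k))).
    + apply sumV_le; intros y Hy. apply Rmult_le_compat_l; [apply Rabs_pos| auto].
    + rewrite sumV_scal_r.
      assert (E: sumV N (fun y => Rabs (Ppow N P tg x y - 1 * pi y)) = Adist N P pi tg x).
      { unfold Adist. apply sumV_ext; intros. f_equal. ring. }
      rewrite E. simpl. specialize (Htg x Hx). assert (0 <= (2*g)^k) by (apply pow_le; lra).
      assert (0 <= 2 * g * (2*g)^k) by (apply Rmult_le_pos; lra).
      nra. Qed.

Lemma mix_sum N P pi tg g w :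
  (forall u v, (u < N)%nat -> (v < N)%nat -> 0 <= P u v) ->
  (forall u, (u < N)%nat -> sumV N (fun v => P u v) = 1) ->
  (forall v, (v < N)%nat -> sumV N (fun u => pi u * P u v) = pi v) ->
  (forall v, (v < N)%nat -> 0 <= pi v) ->
  sumV N pi = 1 -> 0 < g < /2 -> (w < N)%nat ->
  (forall y, (y < N)%nat -> Adist N P pi tg y <= 2 * g) ->
  forall T, (1 - 2 * g) * sumV T (fun s => Adist N P pi s w) <= 2 * INR tg * (1 - g).
Proof. intros HP HR HS Hpi Hs1 Hg Hw Htg T.
  pose proof (blocks N P pi tg g HP HR HS Hs1 ltac:(lra) Htg) as B.
  assert (Hq: 0 <= 2 * g < 1) by lra.
  destruct tg as [|tg'].
  - rewrite sumV_zero. simpl; lra. intros s Hs.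
    apply Rle_antisym; [|apply Adist_nonneg].
    apply (pow_zero_lim (2*g) (2*g) _ Hq). intros k. specialize (B k w s Hw).
    replace (S k * 0 + s)%nat with s in B by lia. exact B.
  - set (tg := S tg'). set (F := fun s => Adist N P pi s w).
    assert (C: forall k, (1 - 2*g) * sumV (S k * tg) F <= INR tg * (2 * (1 - 2*g) + 2*g * (1 - (2*g)^k))).
    { induction k.
      - simpl pow. apply Rle_trans with ((1-2*g) * sumV (S 0 * tg) (fun _ => 2)).
        + apply Rmult_le_compat_l; [lra|]. apply sumV_le; intros. unfold F. apply Adist_le2; auto.
        + rewrite sumV_const. replace (S 0 * tg)%nat with tg by lia. lra.
      - replace (S (S k) * tg)%nat with (S k * tg + tg)%nat by lia. rewrite sumV_add.
        assert (E2: sumV tg (fun r => F (S k * tg + r)%nat) <= INR tg * (2 * g * (2*g)^k)).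
        { rewrite <- sumV_const. apply sumV_le; intros r Hr. unfold F. apply B; auto. }
        simpl pow. assert (0 <= (2*g)^k) by (apply pow_le; lra).
        assert (0 <= INR tg) by apply pos_INR.
        nra. }
    specialize (C T).
    assert (M: sumV T F <= sumV (S T * tg) F).
    { replace (S T * tg)%nat with (T + (S T * tg - T))%nat by (unfold tg; nia).
      rewrite sumV_add. assert (0 <= sumV (S T * tg - T) (fun r => F (T + r)%nat)).
      apply sumV_nonneg; intros; apply Adist_nonneg. lra. }
    assert (0 <= (2*g)^T) by (apply pow_le; lra).
    assert (0 <= INR tg) by apply pos_INR.
    fold F. assert ((1-2*g) * sumV T F <= (1-2*g) * sumV (S T * tg) F) by (apply Rmult_le_compat_l; lra).
    assert (0 <= INR tg * (2*g * (2*g)^T)) by (apply Rmult_le_pos; [lra|apply Rmult_le_pos; lra]).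
    nra. Qed.

Lemma nat_min (Q : nat -> Prop) : (exists n, Q n) -> exists n, Q n /\ forall m, Q m -> (n <= m)%nat.
Proof. intros [n Hn]. revert Hn. induction n as [n IH] using (well_founded_induction lt_wf).
  intros Hn. destruct (classic (exists m, Q m /\ (m < n)%nat)) as [[m [Hm Hlt]]|Hno].
  - exact (IH m Hlt Hm).
  - exists n. split; auto. intros m Hm. destruct (Nat.lt_ge_cases m n); auto.
    exfalso; apply Hno; eauto. Qed.

Lemma sum_pos_ex n f : (forall i, (i < n)%nat -> 0 <= f i) -> sumV n f = 1 -> exists i, (i < n)%nat /\ 0 < f i.
Proof. intros H1 H2. destruct (classic (exists i, (i < n)%nat /\ 0 < f i)) as [E|E]; auto.
  exfalso. assert (sumV n f <= sumV n (fun _ => 0)).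
  { apply sumV_le. intros i Hi. destruct (Rle_dec (f i) 0); auto. exfalso; apply E; exists i; split; auto; lra. }
  rewrite sumV_const in H. lra. Qed.

Lemma pos_add N P a b x y z : (forall u v, (u < N)%nat -> (v < N)%nat -> 0 <= P u v) ->
  (y < N)%nat -> (z < N)%nat -> 0 < Ppow N P a x y -> 0 < Ppow N P b y z -> 0 < Ppow N P (a + b) x z.
Proof. intros HP Hy Hz H1 H2. rewrite Ppow_add by auto.
  eapply Rlt_le_trans; [|apply (sumV_single N (fun w => Ppow N P a x w * Ppow N P b w z) y)]; auto.
  - apply Rmult_lt_0_compat; auto.
  - intros j Hj. apply Rmult_le_pos; apply Ppow_nonneg; auto. Qed.

Lemma ret_mult N P v s k : (forall u v, (u < N)%nat -> (v < N)%nat -> 0 <= P u v) -> (v < N)%nat ->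
  0 < Ppow N P s v v -> (1 <= k)%nat -> 0 < Ppow N P (k * s) v v.
Proof. intros HP Hv Hs Hk. induction k; [lia|]. destruct k. simpl. rewrite Nat.add_0_r. auto.
  replace (S (S k) * s)%nat with (s + S k * s)%nat by lia. apply pos_add with v; auto. apply IHk; lia. Qed.

Lemma eventually_ret N P v : stochastic N P -> ergodic N P -> (v < N)%nat ->
  exists n0, forall t, (n0 <= t)%nat -> 0 < Ppow N P t v v.
Proof. intros [HP HR] [Hirr Hap] Hv. set (Sv := fun t => 0 < Ppow N P t v v).
  destruct (sum_pos_ex N (fun u => P v u) (fun i Hi => HP v i Hv Hi) (HR v Hv)) as [u [Hu Hvu]].
  destruct (Hirr u v Hu Hv) as [b Hb].
  assert (Ha: Sv (1 + b)%nat). { apply pos_add with u; auto. rewrite Ppow_1; auto. }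
  set (a := (1 + b)%nat) in Ha.
  set (Q := fun d => (1 <= d)%nat /\ exists p, (1 <= p)%nat /\ Sv p /\ Sv (p + d)%nat).
  destruct (nat_min Q) as [d [[Hd1 [p [Hp1 [Hp Hpd]]]] Hmin]].
  { exists a. split. unfold a; lia. exists a. split. unfold a; lia. split; auto. apply pos_add with v; auto. }
  assert (Hdiv: forall t, (1 <= t)%nat -> Sv t -> Nat.divide d t).
  { intros t Ht1 Ht. pose proof (Nat.div_mod t d ltac:(lia)) as Edm. pose proof (Nat.mod_upper_bound t d ltac:(lia)).
    set (q := (t / d)%nat) in *. set (r := (t mod d)%nat) in *.
    destruct (Nat.eq_dec r 0) as [Hr0|Hr0].
    - exists q. lia.
    - exfalso.
      assert (HX: Sv (S q * (p + d))%nat) by (apply ret_mult; auto; lia).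
      assert (HY: Sv (t + S q * p)%nat) by (apply pos_add with v; auto; apply ret_mult; auto; lia).
      assert (Q (d - r)%nat).
      { split. lia. exists (t + S q * p)%nat. split. lia. split; auto.
        replace (t + S q * p + (d - r))%nat with (S q * (p + d))%nat by nia. auto. }
      specialize (Hmin _ H0). lia. }
  assert (d = 1%nat) by (apply (Hap v Hv); auto). subst d.
  exists (p * p)%nat. intros t Ht.
  pose proof (Nat.div_mod t p ltac:(lia)) as Edm. pose proof (Nat.mod_upper_bound t p ltac:(lia)).
  set (q := (t / p)%nat) in *. set (r := (t mod p)%nat) in *.
  assert (Hqp: (p <= q)%nat) by nia.
  destruct (Nat.eq_dec r 0) as [Hr0|Hr0].
  - replace t with (q * p)%nat by lia. apply ret_mult; auto; lia.
  - set (e := (q - r)%nat). assert (q = r + e)%nat by lia.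
    replace t with (e * p + r * (p + 1))%nat by nia.
    apply pos_add with v; auto; apply ret_mult; auto; lia. Qed.

Lemma fin_unif (Q : nat -> nat -> Prop) n :
  (forall x, (x < n)%nat -> exists k, forall m, (k <= m)%nat -> Q x m) ->
  exists k, forall x, (x < n)%nat -> forall m, (k <= m)%nat -> Q x m.
Proof. induction n; intros H. exists 0%nat; intros; lia.
  destruct IHn as [k1 H1]. intros; apply H; lia.
  destruct (H n ltac:(lia)) as [k2 H2]. exists (Nat.max k1 k2). intros x Hx m Hm.
  destruct (Nat.eq_dec x n). subst; apply H2; lia. apply H1; lia. Qed.

Lemma fin_lb (Q : nat -> R -> Prop) n :
  (forall x a a', 0 < a' -> a' <= a -> Q x a -> Q x a') ->
  (forall x, (x < n)%nat -> exists a, 0 < a /\ Q x a) ->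
  exists a, 0 < a /\ forall x, (x < n)%nat -> Q x a.
Proof. intros Hd. induction n; intros H. exists 1; split; [lra|intros; lia].
  destruct IHn as [a1 [Ha1 H1]]. intros; apply H; lia.
  destruct (H n ltac:(lia)) as [a2 [Ha2 H2]]. exists (Rmin a1 a2). split.
  apply Rmin_pos; auto. intros x Hx.
  destruct (Nat.eq_dec x n). subst; apply Hd with a2; auto; [apply Rmin_pos; auto| apply Rmin_r].
  apply Hd with a1; auto; [apply Rmin_pos; auto| apply Rmin_l| apply H1; lia]. Qed.

Lemma primitive N P : stochastic N P -> ergodic N P ->
  exists m, forall x y, (x < N)%nat -> (y < N)%nat -> 0 < Ppow N P m x y.
Proof. intros Hst Herg. pose proof Hst as [HP HR]. pose proof Herg as [Hirr Hap].
  destruct (fin_unif (fun x m => forall y, (y < N)%nat -> 0 < Ppow N P m x y) N) as [k Hk].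
  - intros x Hx. destruct (eventually_ret N P x Hst Herg Hx) as [n0 Hn0].
    destruct (fin_unif (fun y m => 0 < Ppow N P m x y) N) as [k' Hk'].
    { intros y Hy.
    destruct (Hirr x y Hx Hy) as [a Ha]. exists (n0 + a)%nat. intros m Hm.
    replace m with ((m - a) + a)%nat by lia. apply pos_add with x; auto. apply Hn0; lia. }
    exists k'. intros m Hm y Hy. apply Hk'; auto.
  - exists k. intros x y Hx Hy. apply Hk; auto. Qed.

Lemma conv N P pi g : (0 < N)%nat -> stochastic N P -> ergodic N P -> stationary N P pi -> 0 < g ->
  forall x, (x < N)%nat -> exists t, Adist N P pi t x <= 2 * g.
Proof. intros HN Hst Herg [Hpi [Hs1 HS]] Hg. pose proof Hst as [HP HR].
  destruct (primitive N P Hst Herg) as [m Hm].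
  destruct (fin_lb (fun x a => forall y, (y < N)%nat -> a <= Ppow N P m x y) N) as [al [Hal Hal2]].
  { intros x a a' H1 H2 H3 y Hy. specialize (H3 y Hy). lra. }
  { intros x Hx. apply (fin_lb (fun y a => a <= Ppow N P m x y) N).
    intros; lra. intros y Hy. exists (Ppow N P m x y). split; auto; lra. }
  assert (Hpi1: forall y, (y < N)%nat -> pi y <= 1).
  { intros y Hy. rewrite <- Hs1. apply sumV_single; auto. }
  assert (HW: forall x y, (x < N)%nat -> (y < N)%nat -> 0 <= Ppow N P m x y - al * pi y).
  { intros x y Hx Hy. specialize (Hal2 x Hx y Hy). specialize (Hpi1 y Hy). specialize (Hpi y Hy). nra. }
  assert (HsW: forall x, (x < N)%nat -> sumV N (fun y => Ppow N P m x y - al * pi y) = 1 - al).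
  { intros x Hx. rewrite sumV_minus, sumV_scal_l, Hs1.
    assert (H1: sumV N (Ppow N P m x) = 1) by exact (Ppow_rowsum N P m x HR Hx). rewrite H1. ring. }
  assert (Hal1: 0 <= 1 - al). { rewrite <- (HsW 0%nat HN). apply sumV_nonneg. intros; apply HW; auto. }
  assert (D: forall k y, (y < N)%nat -> Adist N P pi (k * m) y <= 2 * (1 - al) ^ k).
  { induction k; intros y Hy.
    - simpl. rewrite Rmult_1_r. apply Adist_le2; auto.
    - replace (S k * m)%nat with (m + k * m)%nat by lia.
      eapply Rle_trans. apply (G_bound N P pi m (k * m) y (fun z => Ppow N P m y z - al * pi z)).
      { intros z Hz. rewrite ident; auto. }
      apply Rle_trans with (sumV N (fun z => (Ppow N P m y z - al * pi z) * (2 * (1 - al) ^ k))).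
      + apply sumV_le; intros z Hz. rewrite Rabs_right by (apply Rle_ge, HW; auto).
        apply Rmult_le_compat_l; [apply HW; auto| apply IHk; auto].
      + rewrite sumV_scal_r, HsW by auto. simpl. lra. }
  destruct (pow_small (1 - al) 2 (2 * g)) as [k Hk]; [lra|lra|].
  exists (k * m)%nat. eapply Rle_trans; [apply D; auto| exact Hk]. Qed.

Lemma all_hit N P pi g tg : (0 < N)%nat -> stochastic N P -> ergodic N P -> stationary N P pi -> 0 < g ->
  is_tau N P pi g tg -> forall x, (x < N)%nat -> Adist N P pi tg x <= 2 * g.
Proof. intros HN Hst Herg Hsta Hg [_ Htau] x Hx. pose proof Hst as [HP HR]. pose proof Hsta as [Hpi [Hs1 HS]].
  destruct (nat_min (fun t => dTV_row N P pi t x <= g)) as [t0 [H0 Hmin]].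
  { destruct (conv N P pi g HN Hst Herg Hsta Hg x Hx) as [t Ht]. exists t. unfold dTV_row. fold (Adist N P pi t x). lra. }
  assert (Ht0: (t0 <= tg)%nat).
  { apply (Htau x t0 Hx). split; auto. intros s Hs. destruct (Rlt_dec g (dTV_row N P pi s x)); auto.
    specialize (Hmin s ltac:(lra)). lia. }
  replace tg with (t0 + (tg - t0))%nat by lia. eapply Rle_trans. apply G2; auto.
  unfold dTV_row in H0. fold (Adist N P pi t0 x) in H0. lra. Qed.

Lemma pi_pos N P pi : stochastic N P -> ergodic N P -> stationary N P pi ->
  forall u, (u < N)%nat -> 0 < pi u.
Proof. intros [HP HR] [Hirr _] [Hpi [Hs1 HS]] u Hu.
  destruct (sum_pos_ex N pi Hpi Hs1) as [u0 [Hu0 Hp0]].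
  destruct (Hirr u0 u Hu0 Hu) as [t Ht].
  rewrite <- (stat_pow N P pi t u HS Hu).
  eapply Rlt_le_trans; [|apply (sumV_single N (fun x => pi x * Ppow N P t x u) u0)]; auto.
  apply Rmult_lt_0_compat; auto.
  intros j Hj. apply Rmult_le_pos; auto. apply Ppow_nonneg; auto. Qed.

Lemma chi_S N sigma chi0 t u : chi N sigma chi0 (S t) u = sumVn N (fun v => Zflow N sigma chi0 t v u).
Proof. unfold Zflow, cumchi, chi. simpl. destruct (rstate N sigma chi0 t) as [c cum]. reflexivity. Qed.
Lemma chi_0 N sigma chi0 u : chi N sigma chi0 0 u = chi0 u.
Proof. reflexivity. Qed.

Lemma count_S (f : nat -> bool) a c : INR (length (filter f (seq a (S c)))) =
  INR (length (filter f (seq a c))) + (if f (a + c)%nat then 1 else 0).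
Proof. rewrite seq_S, filter_app, length_app, plus_INR. simpl. destruct (f (a+c)%nat); simpl; lra. Qed.

Lemma flow_cons N sigma v a c : (forall j, (sigma v j < N)%nat) ->
  sumV N (fun u => INR (Icount sigma v u a (a + c))) = INR c.
Proof. intros Hs. unfold Icount. replace (a + c - a)%nat with c by lia. induction c.
  - simpl. apply sumV_zero. intros; reflexivity.
  - transitivity (sumV N (fun u => INR (length (filter (fun j => Nat.eqb (sigma v j) u) (seq a c)))
        + (if Nat.eqb (sigma v (a + c)%nat) u then 1 else 0))).
    { apply sumV_ext; intros. apply count_S. }
    rewrite sumV_plus, IHc, S_INR. f_equal.
    rewrite (sumV_pt N _ (sigma v (a + c)%nat) (Hs _)). rewrite Nat.eqb_refl; reflexivity.
    intros j Hj Hne. destruct (Nat.eqb_spec (sigma v (a + c)%nat) j); [lia|reflexivity]. Qed.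

Lemma filter_nil (f : nat -> bool) l : (forall j, f j = false) -> filter f l = [].
Proof. intros H. induction l; simpl; auto. rewrite H. auto. Qed.

Lemma flow_zero sigma v u a b : (forall j, sigma v j <> u) -> Icount sigma v u a b = 0%nat.
Proof. intros H. unfold Icount. rewrite filter_nil. reflexivity. intros j. apply Nat.eqb_neq. auto. Qed.

Lemma mu_S N P chi0 T w : (w < N)%nat -> mu N P chi0 (S T) w = sumV N (fun x => mu N P chi0 T x * P x w).
Proof. intros Hw. unfold mu.
  transitivity (sumV N (fun v => sumV N (fun x => INR (chi0 v) * Ppow N P T v x * P x w))).
  { apply sumV_ext; intros. rewrite Ppow_S, <- sumV_scal_l. apply sumV_ext; intros; ring. }
  rewrite sumV_swap. apply sumV_ext; intros. rewrite sumV_scal_r. reflexivity. Qed.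

Lemma mu_0 N P chi0 w : (w < N)%nat -> mu N P chi0 0 w = INR (chi0 w).
Proof. intros Hw. unfold mu. rewrite (sumV_pt N _ w Hw). rewrite Ppow_0, Nat.eqb_refl; ring.
  intros j Hj Hne. rewrite Ppow_0. destruct (Nat.eqb_spec j w); [lia|ring]. Qed.

Definition err N P sigma chi0 t u :=
  INR (chi N sigma chi0 (S t) u) - sumV N (fun v => INR (chi N sigma chi0 t v) * P v u).

Lemma err_ident N P sigma chi0 T : forall w, (w < N)%nat ->
  INR (chi N sigma chi0 T w) - mu N P chi0 T w =
  sumV T (fun s => sumV N (fun u => err N P sigma chi0 (T - 1 - s)%nat u * Ppow N P s u w)).
Proof. induction T; intros w Hw.
  - rewrite sumV_0, chi_0, mu_0 by auto. ring.
  - rewrite sumV_shift. rewrite mu_S by auto.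
    replace (INR (chi N sigma chi0 (S T) w)) with
      (err N P sigma chi0 T w + sumV N (fun v => INR (chi N sigma chi0 T v) * P v w)) by (unfold err; ring).
    rewrite (sumV_pt N (fun u => err N P sigma chi0 (S T - 1 - 0)%nat u * Ppow N P 0 u w) w Hw).
    2:{ intros j Hj Hne. rewrite Ppow_0. destruct (Nat.eqb_spec j w); [lia|ring]. }
    rewrite Ppow_0, Nat.eqb_refl. replace (S T - 1 - 0)%nat with T by lia.
    assert (E: sumV N (fun v => INR (chi N sigma chi0 T v) * P v w) - sumV N (fun x => mu N P chi0 T x * P x w)
      = sumV T (fun s => sumV N (fun u => err N P sigma chi0 (S T - 1 - S s)%nat u * Ppow N P (S s) u w))).
    { rewrite <- sumV_minus.
      transitivity (sumV N (fun x => sumV T (fun s => sumV N (fun u =>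
           err N P sigma chi0 (T - 1 - s)%nat u * Ppow N P s u x * P x w)))).
      { apply sumV_ext; intros x Hx. rewrite <- Rmult_minus_distr_r, IHT by auto.
        rewrite <- sumV_scal_r. apply sumV_ext; intros. rewrite <- sumV_scal_r. apply sumV_ext; intros. ring. }
      rewrite sumV_swap. apply sumV_ext; intros s Hs. replace (S T - 1 - S s)%nat with (T - 1 - s)%nat by lia.
      rewrite sumV_swap. apply sumV_ext; intros u Hu. rewrite Ppow_S, <- sumV_scal_l. apply sumV_ext; intros; ring. }
    rewrite <- E. ring. Qed.

Lemma posb_true x : 0 < x -> posb x = true.
Proof. unfold posb. destruct (Rlt_dec 0 x); auto; lra. Qed.
Lemma posb_false x : ~ 0 < x -> posb x = false.
Proof. unfold posb. destruct (Rlt_dec 0 x); auto; lra. Qed.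

Lemma fold_max_ge l x : In x l -> (x <= fold_right Nat.max 0 l)%nat.
Proof. induction l; simpl; intros H; [contradiction|]. destruct H; subst; [lia|]. specialize (IHl H). lia. Qed.
Lemma deg_le N P u : (u < N)%nat -> (degree N P u <= maxdeg N P)%nat.
Proof. intros. unfold maxdeg. apply fold_max_ge. apply in_map. apply in_seq. lia. Qed.
Lemma fold_min_le l i x : In x l -> fold_right Rmin i l <= x.
Proof. induction l; simpl; intros H; [contradiction|]. destruct H; subst. apply Rmin_l.
  eapply Rle_trans; [apply Rmin_r| auto]. Qed.
Lemma fold_min_pos l i : 0 < i -> (forall x, In x l -> 0 < x) -> 0 < fold_right Rmin i l.
Proof. induction l; simpl; intros; auto. apply Rmin_pos; auto. Qed.

Lemma pimin_le N pi u : (u < N)%nat -> pimin N pi <= pi u.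
Proof. intros. unfold pimin. apply fold_min_le. apply in_map. apply in_seq. lia. Qed.
Lemma pimin_pos N pi : (0 < N)%nat -> (forall u, (u < N)%nat -> 0 < pi u) -> 0 < pimin N pi.
Proof. intros HN H. unfold pimin. apply fold_min_pos. apply H; auto.
  intros x Hx. apply in_map_iff in Hx. destruct Hx as [u [<- Hu]]. apply in_seq in Hu. apply H. lia. Qed.

Lemma step_bound N P pi sigma chi0 Psi t s w :
  (0 < N)%nat -> stochastic N P -> stationary N P pi -> reversible N P pi ->
  (forall u, (u < N)%nat -> 0 < pi u) ->
  valid_routers N P sigma -> Psi_bound N P sigma chi0 Psi -> 0 <= Psi -> (w < N)%nat ->
  Rabs (sumV N (fun u => err N P sigma chi0 t u * Ppow N P s u w))
  <= Psi * INR (maxdeg N P) * (pi w / pimin N pi) * Adist N P pi s w.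
Proof. intros HN [HP HR] [Hpi0 [Hs1 HS]] Hrev Hpi Hsig HPsi HPsi0 Hw.
  set (Z := fun v u => INR (Zflow N sigma chi0 t v u) - INR (chi N sigma chi0 t v) * P v u).
  assert (E1: forall u, err N P sigma chi0 t u = sumV N (fun v => Z v u)).
  { intros u. unfold err, Z. rewrite chi_S, sumVn_INR, sumV_minus. reflexivity. }
  assert (E2: sumV N (fun u => err N P sigma chi0 t u) = 0).
  { rewrite (sumV_ext N _ (fun u => sumV N (fun v => Z v u))) by (intros; apply E1).
    rewrite sumV_swap. apply sumV_zero. intros v Hv. unfold Z. rewrite sumV_minus, sumV_scal_l, HR by auto.
    unfold Zflow. rewrite flow_cons. ring. intros j. apply (Hsig v j Hv). }
  set (pm := pimin N pi). assert (Hpm: 0 < pm) by (apply pimin_pos; auto).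
  assert (E3: sumV N (fun u => err N P sigma chi0 t u * Ppow N P s u w) =
     sumV N (fun u => sumV N (fun v => Z v u * (Ppow N P s u w - pi w)))).
  { transitivity (sumV N (fun u => err N P sigma chi0 t u * Ppow N P s u w) - sumV N (fun u => err N P sigma chi0 t u) * pi w).
    rewrite E2; ring. rewrite <- sumV_scal_r, <- sumV_minus. apply sumV_ext; intros u Hu.
    rewrite E1, <- sumV_scal_r, <- sumV_scal_r, <- sumV_minus. apply sumV_ext; intros; ring. }
  rewrite E3. eapply Rle_trans; [apply sumV_abs|].
  apply Rle_trans with (sumV N (fun u => sumV N (fun v => Psi * (if posb (P v u) then 1 else 0) * Rabs (Ppow N P s u w - pi w)))).
  { apply sumV_le; intros u Hu. eapply Rle_trans; [apply sumV_abs|]. apply sumV_le; intros v Hv.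
    rewrite Rabs_mult. destruct (Rlt_dec 0 (P v u)) as [Hp|Hp].
    - rewrite posb_true by auto. apply Rmult_le_compat_r; [apply Rabs_pos|]. rewrite Rmult_1_r. apply HPsi; auto.
    - rewrite posb_false by auto. assert (P v u = 0) by (pose proof (HP v u Hv Hu); lra).
      unfold Z, Zflow. rewrite flow_zero. rewrite H. simpl. rewrite Rmult_0_r, Rminus_0_r, Rabs_R0. lra.
      intros j Hj. destruct (Hsig v j Hv) as [_ Hpj]. rewrite Hj in Hpj. lra. }
  apply Rle_trans with (sumV N (fun u => Psi * INR (maxdeg N P) * (pi w / pm) * Rabs (Ppow N P s w u - pi u))).
  { apply sumV_le; intros u Hu.
    rewrite (sumV_ext N _ (fun v => (Psi * Rabs (Ppow N P s u w - pi w)) * (if posb (P u v) then 1 else 0))).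
    2:{ intros v Hv. replace (posb (P v u)) with (posb (P u v)). ring.
        pose proof (Hrev u v Hu Hv). pose proof (Hpi u Hu). pose proof (Hpi v Hv).
        pose proof (HP u v Hu Hv). pose proof (HP v u Hv Hu).
        destruct (Rlt_dec 0 (P u v)); destruct (Rlt_dec 0 (P v u));
          try (rewrite !posb_true by auto; reflexivity); try (rewrite !posb_false by auto; reflexivity);
          exfalso; nra. }
    rewrite sumV_scal_l. rewrite <- sumV_count. fold (degree N P u).
    assert (Hd: INR (degree N P u) <= INR (maxdeg N P)) by (apply le_INR, deg_le; auto).
    assert (HX: Rabs (Ppow N P s u w - pi w) <= pi w / pm * Rabs (Ppow N P s w u - pi u)).
    { assert (Ee: pi u * (Ppow N P s u w - pi w) = pi w * (Ppow N P s w u - pi u)).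
      { rewrite Rmult_minus_distr_l, rev_pow by auto. ring. }
      assert (Hm: Rabs (Ppow N P s u w - pi w) * pm <= pi w * Rabs (Ppow N P s w u - pi u)).
      { apply Rle_trans with (Rabs (Ppow N P s u w - pi w) * pi u).
        apply Rmult_le_compat_l; [apply Rabs_pos| apply pimin_le; auto].
        pose proof (Hpi u Hu). pose proof (Hpi w Hw).
        replace (Rabs (Ppow N P s u w - pi w) * pi u) with (Rabs (pi u * (Ppow N P s u w - pi w)))
          by (rewrite Rabs_mult, (Rabs_right (pi u)) by lra; ring).
        rewrite Ee, Rabs_mult, (Rabs_right (pi w)) by lra. lra. }
      apply (Rmult_le_reg_r pm); auto.
      replace (pi w / pm * Rabs (Ppow N P s w u - pi u) * pm) with (pi w * Rabs (Ppow N P s w u - pi u)) by (field; lra).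
      exact Hm. }
    pose proof (Rabs_pos (Ppow N P s u w - pi w)). pose proof (pos_INR (degree N P u)).
    pose proof (Rabs_pos (Ppow N P s w u - pi u)).
    assert (0 <= pi w / pm) by (pose proof (Hpi w Hw); apply Rlt_le, Rdiv_lt_0_compat; lra).
    apply Rle_trans with (Psi * Rabs (Ppow N P s u w - pi w) * INR (maxdeg N P)).
    apply Rmult_le_compat_l; auto. apply Rmult_le_pos; auto.
    replace (Psi * INR (maxdeg N P) * (pi w / pm) * Rabs (Ppow N P s w u - pi u))
      with (Psi * (pi w / pm * Rabs (Ppow N P s w u - pi u)) * INR (maxdeg N P)) by ring.
    apply Rmult_le_compat_r; [apply pos_INR|]. apply Rmult_le_compat_l; auto. }
  rewrite sumV_scal_l. unfold Adist. lra. Qed.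

Theorem theorem3p1 (N : nat) (P : nat -> nat -> R) (pi : nat -> R)
  (HN : (0 < N)%nat)
  (Hst : stochastic N P) (Herg : ergodic N P) (Hpi : stationary N P pi)
  (Hrev : reversible N P pi)
  (sigma : nat -> nat -> nat) (Hsigma : valid_routers N P sigma)
  (chi0 : nat -> nat)
  (Psi : R) (HPsi : Psi_bound N P sigma chi0 Psi) :
  forall (w T : nat) (gamma : R) (tg : nat),
    (w < N)%nat -> 0 < gamma < / 2 -> is_tau N P pi gamma tg ->
    Rabs (INR (chi N sigma chi0 T w) - mu N P chi0 T w)
      <= Psi * (2 * (1 - gamma) / (1 - 2 * gamma)) * INR tg
           * (pi w / pimin N pi) * INR (maxdeg N P).
Proof.
  intros w T g tg Hw Hg Htau.
  pose proof Hst as [HP HR]. pose proof Hpi as [Hpi0 [Hs1 HS]].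
  pose proof (pi_pos N P pi Hst Herg Hpi) as Hpos.
  assert (HPsi0: 0 <= Psi).
  { destruct (sum_pos_ex N (fun u => P 0%nat u) (fun i Hi => HP 0%nat i HN Hi) (HR 0%nat HN)) as [u [Hu Hpu]].
    specialize (HPsi 0%nat u 0%nat HN Hu Hpu). pose proof (Rabs_pos (INR (Zflow N sigma chi0 0 0 u) - INR (chi N sigma chi0 0 0) * P 0%nat u)). lra. }
  pose proof (all_hit N P pi g tg HN Hst Herg Hpi ltac:(lra) Htau) as Hall.
  pose proof (mix_sum N P pi tg g w HP HR HS Hpi0 Hs1 Hg Hw Hall T) as Hmix.
  set (pm := pimin N pi). assert (Hpm: 0 < pm) by (apply pimin_pos; auto).
  set (K := Psi * INR (maxdeg N P) * (pi w / pm)).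
  assert (HK: 0 <= K).
  { unfold K. apply Rmult_le_pos. apply Rmult_le_pos; auto. apply pos_INR.
    pose proof (Hpos w Hw). apply Rlt_le, Rdiv_lt_0_compat; lra. }
  rewrite err_ident by auto.
  eapply Rle_trans; [apply sumV_abs|].
  apply Rle_trans with (sumV T (fun s => K * Adist N P pi s w)).
  { apply sumV_le; intros s Hs. unfold K, pm. apply step_bound; auto. }
  rewrite sumV_scal_l.
  assert (Hsum: sumV T (fun s => Adist N P pi s w) <= 2 * INR tg * (1 - g) / (1 - 2 * g)).
  { apply (Rmult_le_reg_l (1 - 2 * g)); [lra|].
    replace ((1 - 2 * g) * (2 * INR tg * (1 - g) / (1 - 2 * g))) with (2 * INR tg * (1 - g)) by (field; lra).
    exact Hmix. }
  apply Rle_trans with (K * (2 * INR tg * (1 - g) / (1 - 2 * g))).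
  apply Rmult_le_compat_l; auto.
  unfold K. right. fold pm. field. split; lra. Qed.
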